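(* Let $R$ be a semiring and $f, g: N \to M$ homomorphisms of left $R$-semimodules. Let $\sim_{\langle f,g\rangle}$ be the relation on $M$ given by $m \sim_{\langle f,g\rangle} m'$ iff $h(m) = h(m')$ for all left $R$-semimodules $P$ and all homomorphisms $h: M \to P$ with $h \circ f = h \circ g$. Let $\sim_{(f,g)}$ be the relation on $M$ given by $m \sim_{(f,g)} m'$ iff there exist $k \ge 1$, $m_1, \ldots, m_k \in M$ and $n_1, \ldots, n_k, n'_1, \ldots, n'_k \in N$ with $m = m_1 + f(n_1) + g(n'_1)$, $m_i + f(n'_i) + g(n_i) = m_{i+1} + f(n_{i+1}) + g(n'_{i+1})$ for $1 \le i \le k-1$, and $m_k + f(n'_k) + g(n_k) = m'$. Then the relations $\sim_{\langle f,g\rangle}$ and $\sim_{(f,g)}$ are equal.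
   Context: A semiring $R$ is a commutative monoid $(R,+,0)$ with an associative multiplication with unit $1$, distributive on both sides, and with $0r = 0 = r0$. A left $R$-semimodule is a commutative monoid $(M,+,0)$ with a map $R\times M \to M$ satisfying $(rr')m = r(r'm)$, $(r+r')m = rm + r'm$, $r(m+m') = rm + rm'$, $1m = m$, $0m = 0 = r0$; homomorphisms are additive maps with $f(rm)=rf(m)$. *)

(* Defs.v *)
From HB Require Import structures.
From mathcomp Require Import all_boot all_algebra.
Set Implicit Arguments. Unset Strict Implicit. Unset Printing Implicit Defensive.
Import GRing.Theory.
Local Open Scope ring_scope.

Definition sim_hom (R : pzSemiRingType) (N M : lSemiModType R)
    (f g : {linear N -> M}) (m m' : M) : Prop :=
  forall (P : lSemiModType R) (h : {linear M -> P}),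
    (forall n : N, h (f n) = h (g n)) -> h m = h m'.

(* m ~(f,g) m' : zig-zag chain of length k >= 1, indexed 0..k-1. *)
Definition sim_chain (R : pzSemiRingType) (N M : lSemiModType R)
    (f g : {linear N -> M}) (m m' : M) : Prop :=
  exists (k : nat) (ms : nat -> M) (ns ns' : nat -> N),
    [/\ (0 < k)%N,
        m = ms 0%N + f (ns 0%N) + g (ns' 0%N),
        (forall i : nat, (i.+1 < k)%N ->
           ms i + f (ns' i) + g (ns i)
           = ms i.+1 + f (ns i.+1) + g (ns' i.+1))
      & ms k.-1 + f (ns' k.-1) + g (ns k.-1) = m'].

(* Main.v *)
Require Import Defs.
From HB Require Import structures.
From mathcomp Require Import all_boot all_algebra.
From mathcomp Require Import zify.
From Stdlib Require Import ClassicalEpsilon.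
Set Implicit Arguments. Unset Strict Implicit. Unset Printing Implicit Defensive.
Import GRing.Theory.

Section Chain.
Variables (R : pzSemiRingType) (N M : lSemiModType R) (f g : {linear N -> M}).
Local Open Scope ring_scope.

Notation ch := (sim_chain f g).

Lemma ch_refl m : ch m m.
Proof.
exists 1%N, (fun _ => m), (fun _ => 0), (fun _ => 0).
by split => //; rewrite ?linear0 ?addr0.
Qed.

Lemma ch_sym m m' : ch m m' -> ch m' m.
Proof.
case=> k [a [b [c [k0 e0 el ek]]]].
exists k, (fun i => a (k.-1 - i)%N), (fun i => c (k.-1 - i)%N),
  (fun i => b (k.-1 - i)%N); split => //.
- by rewrite subn0 ek.
- move=> i ik.
  have -> : (k.-1 - i = (k.-1 - i.+1).+1)%N by lia.
  symmetry; apply: el; lia.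
- by rewrite subnn.
Qed.

Lemma ch_trans m1 m2 m3 : ch m1 m2 -> ch m2 m3 -> ch m1 m3.
Proof.
case=> k1 [a [b [c [k10 e0 el ek]]]].
case=> k2 [a' [b' [c' [k20 e0' el' ek']]]].
exists (k1 + k2)%N, (fun i => if (i < k1)%N then a i else a' (i - k1)%N),
  (fun i => if (i < k1)%N then b i else b' (i - k1)%N),
  (fun i => if (i < k1)%N then c i else c' (i - k1)%N); split.
- lia.
- by rewrite k10.
- move=> i ik /=.
  case: (ltnP i.+1 k1) => h1.
  + rewrite (ltn_trans (ltnSn i) h1); apply: el; lia.
  case: (ltnP i k1) => h2.
  + have ei : i = k1.-1 by lia.
    have -> : (i.+1 - k1 = 0)%N by lia.
    by rewrite ei ek e0'.
  + rewrite /=.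
    have -> : (i.+1 - k1 = (i - k1).+1)%N by lia.
    apply: el'; lia.
- have -> : ((k1 + k2).-1 < k1)%N = false by lia.
  have -> : ((k1 + k2).-1 - k1 = k2.-1)%N by lia.
  exact: ek'.
Qed.

Lemma addr_shuf (x p y z : M) : x + p + y + z = x + y + z + p.
Proof. by rewrite -!addrA; congr (_ + _); rewrite addrC -!addrA. Qed.

Lemma ch_addr m m' p : ch m m' -> ch (m + p) (m' + p).
Proof.
case=> k [a [b [c [k0 e0 el ek]]]].
exists k, (fun i => a i + p), b, c; split => //.
- by rewrite e0 [RHS]addr_shuf.
- by move=> i ik; rewrite [LHS]addr_shuf [RHS]addr_shuf el.
- by rewrite [LHS]addr_shuf ek.
Qed.

Lemma ch_add m1 m1' m2 m2' : ch m1 m1' -> ch m2 m2' -> ch (m1 + m2) (m1' + m2').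
Proof.
move=> h1 h2; apply: ch_trans (ch_addr m2 h1) _.
rewrite [m1' + m2]addrC [m1' + m2']addrC; exact: ch_addr.
Qed.

Lemma ch_scale r m m' : ch m m' -> ch (r *: m) (r *: m').
Proof.
case=> k [a [b [c [k0 e0 el ek]]]].
exists k, (fun i => r *: a i), (fun i => r *: b i), (fun i => r *: c i);
  split => //.
- by rewrite e0 !scalerDr !linearZZ.
- by move=> i ik; rewrite !linearZZ -!scalerDr el.
- by rewrite !linearZZ -!scalerDr ek.
Qed.

Lemma ch_fg n : ch (f n) (g n).
Proof.
exists 1%N, (fun _ => 0), (fun _ => n), (fun _ => 0).
by split => //; rewrite ?linear0 ?addr0 ?add0r.
Qed.

Definition cb (P : Prop) : bool := if excluded_middle_informative P then true else false.
Lemma cbP (P : Prop) : reflect P (cb P).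
Proof. by rewrite /cb; case: excluded_middle_informative => h; constructor. Qed.

Definition canon (x : M) : M :=
  xchoose (ex_intro (fun z => cb (ch z x)) x (introT (cbP _) (ch_refl x))).

Lemma canon_rel x : ch (canon x) x.
Proof. exact/cbP/(xchooseP (ex_intro (fun z => cb (ch z x)) x (introT (cbP _) (ch_refl x)))). Qed.

Lemma canon_eq x y : ch x y -> canon x = canon y.
Proof.
move=> h; apply: eq_xchoose => z.
apply/cbP/cbP => hz; [exact: ch_trans hz h | exact: ch_trans hz (ch_sym h)].
Qed.

Lemma canon_idem x : canon (canon x) = canon x.
Proof. exact/canon_eq/canon_rel. Qed.

Definition Q := {x : M | canon x == x}.
HB.instance Definition _ := Choice.on Q.

Definition qpi (x : M) : Q := exist _ (canon x) (introT eqP (canon_idem x)).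

Lemma qpi_val (q : Q) : qpi (val q) = q.
Proof. apply: val_inj => /=; exact: (eqP (valP q)). Qed.

Lemma qpi_eq x y : ch x y -> qpi x = qpi y.
Proof. by move=> h; apply: val_inj => /=; apply: canon_eq. Qed.

Lemma qpi_canon x : qpi (canon x) = qpi x.
Proof. exact/qpi_eq/canon_rel. Qed.

Definition qadd (p q : Q) : Q := qpi (val p + val q).
Definition qzero : Q := qpi 0.
Definition qscale (r : R) (q : Q) : Q := qpi (r *: val q).

Lemma qaddE x y : qadd (qpi x) (qpi y) = qpi (x + y).
Proof. by apply: qpi_eq; apply: ch_add; apply: canon_rel. Qed.

Lemma qscaleE r x : qscale r (qpi x) = qpi (r *: x).
Proof. by apply: qpi_eq; apply: ch_scale; apply: canon_rel. Qed.

Lemma qind (P : Q -> Prop) : (forall x, P (qpi x)) -> forall q, P q.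
Proof. by move=> h q; rewrite -(qpi_val q). Qed.

Lemma qaddA : associative qadd.
Proof.
by elim/qind=> x; elim/qind=> y; elim/qind=> z; rewrite !qaddE addrA.
Qed.
Lemma qaddC : commutative qadd.
Proof. by elim/qind=> x; elim/qind=> y; rewrite !qaddE addrC. Qed.
Lemma qadd0 : left_id qzero qadd.
Proof. by elim/qind=> x; rewrite /qzero qaddE add0r. Qed.

HB.instance Definition _ := GRing.isNmodule.Build Q qaddA qaddC qadd0.

Lemma qscaleA a b (v : Q) : qscale a (qscale b v) = qscale (a * b) v.
Proof. by elim/qind: v => x; rewrite !qscaleE scalerA. Qed.
Lemma qscale0 (v : Q) : qscale 0 v = 0.
Proof. by elim/qind: v => x; rewrite qscaleE scale0r. Qed.
Lemma qscale1 : left_id 1 qscale.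
Proof. by elim/qind=> x; rewrite qscaleE scale1r. Qed.
Lemma qscaleDr : right_distributive qscale qadd.
Proof.
by move=> a; elim/qind=> x; elim/qind=> y; rewrite qaddE !qscaleE qaddE scalerDr.
Qed.
Lemma qscaleDl (v : Q) : {morph qscale^~ v : a b / a + b >-> qadd a b}.
Proof.
by elim/qind: v => x a b /=; rewrite !qscaleE qaddE scalerDl.
Qed.

HB.instance Definition _ :=
  GRing.Nmodule_isLSemiModule.Build R Q qscaleA qscale0 qscale1 qscaleDr qscaleDl.

Lemma qpi_semilinear : semilinear_for *:%R qpi.
Proof.
split.
- by move=> a x; rewrite /= -qscaleE.
- by move=> x y; rewrite /= -qaddE.
Qed.

HB.instance Definition _ := GRing.isSemilinear.Build R M Q *:%R qpi qpi_semilinear.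

Lemma hom_chain m m' : sim_hom f g m m' -> ch m m'.
Proof.
move=> H.
have e : qpi m = qpi m'.
  apply: (H _ qpi) => n /=; exact/qpi_eq/ch_fg.
have e' : canon m = canon m' by move: (congr1 val e).
apply: ch_trans (ch_sym (canon_rel m)) _; rewrite e'; exact: canon_rel.
Qed.

Lemma chain_hom m m' : ch m m' -> sim_hom f g m m'.
Proof.
case=> k [a [b [c [k0 e0 el ek]]]] P h hfg.
have key : forall i, (i < k)%N -> h m = h (a i + f (b i) + g (c i)).
  elim=> [|i IH] ik; first by rewrite e0.
  by rewrite IH ?(ltnW ik) // -el // !linearD hfg -(hfg (c i)) addrAC.
rewrite -ek (key k.-1); last by lia.
by rewrite !linearD hfg -(hfg (c k.-1)) addrAC.
Qed.

End Chain.

Theorem theorem2p14 (R : pzSemiRingType) (N M : lSemiModType R)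
    (f g : {linear N -> M}) :
  forall m m' : M, sim_hom f g m m' <-> sim_chain f g m m'.
Proof.
move=> m m'; split; [exact: hom_chain | exact: chain_hom].
Qed.
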